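(* Let $D$ and $D'=D+A$ be generalized connections on $E$, with $A\in \Gamma (E^*\otimes \mathfrak{so}(E))$, and let $D^S$ be an $E$-connection on $S$ compatible with $D$. Then: (i) The torsions $T'$ and $T$ of $D'$ and $D$ are related by $T'= T + \alpha$, where $\alpha \in \Gamma (\wedge^3E^* )$ is given by $\alpha (u,v,w) = \sum_{(u,v,w)\; \mathrm{cyclic}} \langle A_uv,w\rangle$. (ii) The $E$-connection $(D^S)' := D^S -\frac12 A$ is compatible with $D'$. Here $A$ is considered as a map $E\rightarrow \wedge^2E^*\cong \wedge ^2E\subset \mathrm{Cl}(E)$, so that $A_e$ acts by Clifford multiplication on $S$ for all $e\in E$. (iii) The Dirac operators $D\!\!\!\!/^{\,S}$ and $(D\!\!\!\!/^{\,S})'$ associated with $(D,D^S)$ and $(D',(D^S)')$ are related by $(D\!\!\!\!/^{\,S})' = D\!\!\!\!/^{\,S} - \frac14 \gamma_\alpha -\frac14 \gamma_{v_A}$, where $v_A = \mathrm{tr}_{\langle \cdot ,\cdot \rangle}A= \sum_i A_{e_i}\tilde{e}_i \in \Gamma (E)$. (iv) The operators $d\!\!\!/_{S}= D\!\!\!\!/^{\,S}+\frac{1}{4} \gamma_{T}$ and $d\!\!\!/^{\,\prime}_{S}= (D\!\!\!\!/^{\,S})' +\frac{1}{4} \gamma_{T'}$ are related by $d\!\!\!/^{\,\prime}_{S}= d\!\!\!/_{S} -\frac{1}{4} \gamma_{v_{A}}$.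
   Context: Let $E\to M$ be a regular Courant algebroid (anchor $\pi$ of constant rank, Dorfman bracket $[\cdot,\cdot]$) with scalar product $\langle\cdot,\cdot\rangle$ of neutral signature, and $S$ a bundle of irreducible $\mathrm{Cl}(E)$-modules (Clifford relation $e^2=\langle e,e\rangle$) with action $a\mapsto\gamma_a$. A generalized connection is an $\mathbb R$-linear $D:\Gamma(E)\to\Gamma(E^*\otimes E)$ with $D_e(fv)=\pi(e)(f)v+fD_ev$, compatible with $\langle\cdot,\cdot\rangle$; its torsion $T(u,v,w)=\langle D_uv-D_vu-[u,v]+(Du)^*v,w\rangle$ is a 3-form, identified with an element of $\wedge^3E\subset\mathrm{Cl}(E)$. $E$ is identified with $E^*$ via $\langle\cdot,\cdot\rangle$, and $\wedge^2E\subset\mathrm{End}\,E$ via $(e_1\wedge e_2)(e_3)=\langle e_1,e_3\rangle e_2-\langle e_2,e_3\rangle e_1$. An $E$-connection $D^S$ on $S$ is compatible with $D$ if $D^S_e(as)=(D_ea)s+aD^S_es$. The Dirac operator is $D\!\!\!\!/^{\,S}=\frac12\sum_i\tilde e_iD^S_{e_i}$, with $(e_i)$ a local frame of $E$ and $(\tilde e_i)$ the dual frame, $\langle e_i,\tilde e_j\rangle=\delta_{ij}$. *)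

(* Defs.v *)
(* an algebraic (module-of-sections) model of a Courant
   algebroid E -> M and a Clifford-module bundle S -> M. *)
From HB Require Import structures.
From mathcomp Require Import all_boot all_order all_algebra.
From mathcomp Require Import reals.
Set Implicit Arguments.
Unset Strict Implicit.
Unset Printing Implicit Defensive.
Import Order.TTheory GRing.Theory Num.Theory.
Local Open Scope ring_scope.

Section CourantDefs.
Variables (R : realType) (K : comAlgType R) (V S : lmodType K).
(* K  = ring C^oo(M) of smooth real functions (an R-algebra),
   V  = Gamma(E), S = Gamma(S), both K-modules. *)

Definition rK (r : R) : K := r%:A.
Definition coef_half : K := rK (2%:R)^-1.
Definition coef_quarter : K := rK (4%:R)^-1.
Definition coef_sixth : K := rK (6%:R)^-1.

(* vector fields act on functions as R-linear derivations *)
Definition derivation (d : K -> K) : Prop :=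
  [/\ forall x y, d (x + y) = d x + d y,
      forall (r : R) x, d (r *: x) = r *: d x &
      forall x y, d (x * y) = d x * y + x * d y].

Definition anchor_ok (pi : V -> K -> K) : Prop :=
  [/\ forall e, derivation (pi e),
      forall e1 e2 x, pi (e1 + e2) x = pi e1 x + pi e2 x &
      forall (f : K) e x, pi (f *: e) x = f * pi e x].

Definition scalar_product (ip : V -> V -> K) : Prop :=
  [/\ forall u v, ip u v = ip v u,
      forall u1 u2 v, ip (u1 + u2) v = ip u1 v + ip u2 v &
      forall (f : K) u v, ip (f *: u) v = f * ip u v].

Definition courant_algebroid (pi : V -> K -> K) (br : V -> V -> V)
  (ip : V -> V -> K) : Prop :=
  [/\ anchor_ok pi, scalar_product ip,
      forall u1 u2 v, br (u1 + u2) v = br u1 v + br u2 v,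
      forall u v1 v2, br u (v1 + v2) = br u v1 + br u v2 &
      forall u (f : K) v, br u (f *: v) = pi u f *: v + f *: br u v] /\
  [/\ forall u v w, br u (br v w) = br (br u v) w + br v (br u w),
      forall u v w, pi u (ip v w) = ip (br u v) w + ip v (br u w) &
      forall u v w, ip (br u v + br v u) w = pi w (ip u v)].

Definition clifford_module (ip : V -> V -> K) (gamma : V -> S -> S) : Prop :=
  [/\ forall e1 e2 s, gamma (e1 + e2) s = gamma e1 s + gamma e2 s,
      forall (f : K) e s, gamma (f *: e) s = f *: gamma e s,
      forall e s1 s2, gamma e (s1 + s2) = gamma e s1 + gamma e s2,
      forall e (f : K) s, gamma e (f *: s) = f *: gamma e s &
      forall e s, gamma e (gamma e s) = ip e e *: s].

Definition local_frame (ip : V -> V -> K) (n : nat) (e et : 'I_n -> V) : Prop :=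
  (forall v, exists c : 'I_n -> K, v = \sum_(i < n) c i *: e i) /\
  (forall i j, ip (e i) (et j) = (i == j)%:R).

Definition gen_connection (pi : V -> K -> K) (ip : V -> V -> K)
  (D : V -> V -> V) : Prop :=
  [/\ forall u1 u2 v, D (u1 + u2) v = D u1 v + D u2 v,
      forall (f : K) u v, D (f *: u) v = f *: D u v,
      forall u v1 v2, D u (v1 + v2) = D u v1 + D u v2,
      forall u (f : K) v, D u (f *: v) = pi u f *: v + f *: D u v &
      forall u v w, pi u (ip v w) = ip (D u v) w + ip v (D u w)].

Definition so_valued (ip : V -> V -> K) (A : V -> V -> V) : Prop :=
  [/\ forall u1 u2 v, A (u1 + u2) v = A u1 v + A u2 v,
      forall (f : K) u v, A (f *: u) v = f *: A u v,
      forall u v1 v2, A u (v1 + v2) = A u v1 + A u v2,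
      forall u (f : K) v, A u (f *: v) = f *: A u v &
      forall u v w, ip (A u v) w + ip v (A u w) = 0].

(* torsion T(u,v,w) = <D_u v - D_v u - [u,v] + (Du)^* v, w>,
   where <(Du)^* v, w> = <v, D_w u> *)
Definition torsion (br : V -> V -> V) (ip : V -> V -> K) (D : V -> V -> V)
  (u v w : V) : K :=
  ip (D u v - D v u - br u v) w + ip v (D w u).

Definition E_connection (pi : V -> K -> K) (DS : V -> S -> S) : Prop :=
  [/\ forall u1 u2 s, DS (u1 + u2) s = DS u1 s + DS u2 s,
      forall (f : K) u s, DS (f *: u) s = f *: DS u s,
      forall u s1 s2, DS u (s1 + s2) = DS u s1 + DS u s2 &
      forall u (f : K) s, DS u (f *: s) = pi u f *: s + f *: DS u s].

Definition compatible (gamma : V -> S -> S) (D : V -> V -> V)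
  (DS : V -> S -> S) : Prop :=
  forall u a s, DS u (gamma a s) = gamma (D u a) s + gamma a (DS u s).

(* Clifford action of B in so(E) = wedge^2 E subset Cl(E) under
   (e1/\e2)(e3) = <e1,e3>e2 - <e2,e3>e1 and e1/\e2 = (e1 e2 - e2 e1)/2:
   B corresponds to (1/2) sum_i et_i . B(e_i) *)
Definition cl2 (gamma : V -> S -> S) (n : nat) (e et : 'I_n -> V)
  (B : V -> V) (s : S) : S :=
  coef_half *: \sum_(i < n) gamma (et i) (gamma (B (e i)) s).

(* Clifford action of a 3-form a in wedge^3 E^* = wedge^3 E subset Cl(E):
   a = sum_{i<j<k} a(e_i,e_j,e_k) et_i /\ et_j /\ et_k
     = (1/6) sum_{i,j,k} a(e_i,e_j,e_k) et_i et_j et_k *)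
Definition cl3 (gamma : V -> S -> S) (n : nat) (e et : 'I_n -> V)
  (a : V -> V -> V -> K) (s : S) : S :=
  coef_sixth *: \sum_(i < n) \sum_(j < n) \sum_(k < n)
    a (e i) (e j) (e k) *: gamma (et i) (gamma (et j) (gamma (et k) s)).

Definition dirac (gamma : V -> S -> S) (n : nat) (e et : 'I_n -> V)
  (DS : V -> S -> S) (s : S) : S :=
  coef_half *: \sum_(i < n) gamma (et i) (DS (e i) s).

Definition alphaA (ip : V -> V -> K) (A : V -> V -> V) (u v w : V) : K :=
  ip (A u v) w + ip (A v w) u + ip (A w u) v.

Definition traceA (n : nat) (e et : 'I_n -> V) (A : V -> V -> V) : V :=
  \sum_(i < n) A (e i) (et i).

End CourantDefs.

Arguments coef_half {R K}.
Arguments coef_quarter {R K}.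
Arguments coef_sixth {R K}.

(* Main.v *)
Require Import Defs.
From HB Require Import structures.
From mathcomp Require Import all_boot all_order all_algebra.
From mathcomp Require Import reals.
From mathcomp Require Import ring.
Import GRing.Theory.
Local Open Scope ring_scope.

Set Implicit Arguments.
Unset Strict Implicit.
Import Num.Theory.
Section Sc.
Variables (R : realType) (K : comAlgType R).
Lemma rKM (a b : R) : rK K a * rK K b = rK K (a * b).
Proof. by rewrite /rK -scalerAl mul1r scalerA. Qed.
Lemma rKn (m : nat) : rK K m%:R = m%:R.
Proof. by rewrite /rK scaler_nat. Qed.
Lemma half2 : coef_half * 2%:R = 1 :> K.
Proof. by rewrite /coef_half -rKn rKM mulVf ?pnatr_eq0 // /rK scale1r. Qed.
Lemma quarterE : coef_quarter = coef_half * coef_half :> K.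
Proof. by rewrite /coef_quarter /coef_half rKM (_ : 4%:R = 2%:R * 2%:R :> R) ?invfM // -natrM. Qed.
Lemma sixth3 : coef_sixth * 3%:R = coef_half :> K.
Proof. rewrite /coef_sixth /coef_half -rKn rKM; congr (rK _ _).
 rewrite (_ : 6%:R = 2%:R * 3%:R :> R); last by rewrite -natrM.
 by rewrite invfM -mulrA mulVf ?mulr1 // pnatr_eq0. Qed.
Lemma sixth6 : coef_sixth * 6%:R = 1 :> K.
Proof. by rewrite /coef_sixth -rKn rKM mulVf ?pnatr_eq0 // /rK scale1r. Qed.
Lemma half4 : coef_half * (coef_half * 4%:R) = 1 :> K.
Proof. rewrite (_ : 4%:R = 2%:R * 2%:R :> K); last by rewrite -natrM.
by rewrite mulrA mulrACA half2 mul1r. Qed.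
End Sc.
Lemma ab1 (M : zmodType) (P Q X Y : M) : P + Q - (X - Y) = P + Y + (Q - X).
Proof. by rewrite opprB addrACA addrC (addrC Q) addrACA (addrC (-X)). Qed.
Lemma ab2 (M : zmodType) (a b c d : M) : a - b - c + (d + b) = a + d - c.
Proof. by rewrite addrAC addrACA addNr addr0. Qed.
Lemma ab3 (M : zmodType) (a b c : M) : a - (b - c) - c = a - b.
Proof. by rewrite opprB addrA addrAC addrK. Qed.
Lemma ab4 (K : comNzRingType) (M : lmodType K) (Q g : M) :
  Q + (Q - 2%:R *: g) + (Q - 4%:R *: g) = 3%:R *: Q - 6%:R *: g.
Proof.
rewrite !scaler_nat !addrA (addrAC (Q + Q)) -addrA -opprD -mulrnDr.
by rewrite -mulr2n -mulrSr.
Qed.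
Section Alg.
Variables (R : realType) (K : comAlgType R) (V S : lmodType K).
Variables (ip : V -> V -> K) (gamma : V -> S -> S) (n : nat) (e et : 'I_n -> V).
Hypotheses (sp : scalar_product ip) (cm : clifford_module ip gamma)
  (fr : local_frame ip e et).

Lemma ipC u v : ip u v = ip v u. Proof. by case: sp. Qed.
Lemma ipDl u1 u2 v : ip (u1 + u2) v = ip u1 v + ip u2 v. Proof. by case: sp. Qed.
Lemma ipZl f u v : ip (f *: u) v = f * ip u v. Proof. by case: sp. Qed.
Lemma ipDr u v1 v2 : ip u (v1 + v2) = ip u v1 + ip u v2.
Proof. by rewrite ipC ipDl !(ipC u). Qed.
Lemma ipZr f u v : ip u (f *: v) = f * ip u v. Proof. by rewrite ipC ipZl ipC. Qed.
Lemma ip0l v : ip 0 v = 0. Proof. by have := ipZl 0 0 v; rewrite scale0r mul0r. Qed.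
Lemma ipNl u v : ip (- u) v = - ip u v. Proof. by rewrite -scaleN1r ipZl mulN1r. Qed.
Lemma ipBl u1 u2 v : ip (u1 - u2) v = ip u1 v - ip u2 v. Proof. by rewrite ipDl ipNl. Qed.
Lemma ipsuml (I : finType) (F : I -> V) v : ip (\sum_i F i) v = \sum_i ip (F i) v.
Proof. by apply: (big_morph (fun x => ip x v)) => [x y|]; rewrite ?ipDl ?ip0l. Qed.
Lemma ipsumr (I : finType) (F : I -> V) v : ip v (\sum_i F i) = \sum_i ip v (F i).
Proof. by rewrite ipC ipsuml; apply: eq_bigr => i _; rewrite ipC. Qed.

Lemma gDl e1 e2 s : gamma (e1 + e2) s = gamma e1 s + gamma e2 s. Proof. by case: cm. Qed.
Lemma gZl f x s : gamma (f *: x) s = f *: gamma x s. Proof. by case: cm. Qed.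
Lemma gDr x s1 s2 : gamma x (s1 + s2) = gamma x s1 + gamma x s2. Proof. by case: cm. Qed.
Lemma gZr x f s : gamma x (f *: s) = f *: gamma x s. Proof. by case: cm. Qed.
Lemma gsq x s : gamma x (gamma x s) = ip x x *: s. Proof. by case: cm. Qed.
Lemma g0l s : gamma 0 s = 0. Proof. by have := gZl 0 0 s; rewrite !scale0r. Qed.
Lemma g0r x : gamma x 0 = 0. Proof. by have := gZr x 0 0; rewrite !scale0r. Qed.
Lemma gNr x s : gamma x (- s) = - gamma x s. Proof. by rewrite -scaleN1r gZr scaleN1r. Qed.
Lemma gNl x s : gamma (- x) s = - gamma x s. Proof. by rewrite -scaleN1r gZl scaleN1r. Qed.
Lemma gBr x s1 s2 : gamma x (s1 - s2) = gamma x s1 - gamma x s2. Proof. by rewrite gDr gNr. Qed.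
Lemma gsuml (I : finType) (F : I -> V) s : gamma (\sum_i F i) s = \sum_i gamma (F i) s.
Proof. by apply: (big_morph (fun x => gamma x s)) => [x y|]; rewrite ?gDl ?g0l. Qed.
Lemma gsumr (I : finType) (F : I -> S) x : gamma x (\sum_i F i) = \sum_i gamma x (F i).
Proof. by apply: (big_morph (gamma x)) => [y z|]; rewrite ?gDr ?g0r. Qed.

Lemma anticomm x y s :
  gamma x (gamma y s) + gamma y (gamma x s) = (2%:R * ip x y) *: s.
Proof.
have := gsq (x + y) s.
rewrite !gDl !gDr !gsq ipDl !ipDr (ipC y x) !scalerDl.
rewrite -!addrA => /addrI.
rewrite addrCA !addrA => /addIr.
by rewrite addrC mulr_natl mulr2n scalerDl.
Qed.
Lemma gswap x y s :
  gamma x (gamma y s) = (2%:R * ip x y) *: s - gamma y (gamma x s).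
Proof. by rewrite -anticomm addrK. Qed.

Lemma dualE i j : ip (e i) (et j) = (i == j)%:R. Proof. by case: fr => _ ->. Qed.

Lemma expand1 x : x = \sum_i ip x (et i) *: e i.
Proof.
case: fr => span _; case: (span x) => c ->.
apply: eq_bigr => i _; congr (_ *: _).
rewrite ipsuml (bigD1 i) //= ipZl dualE eqxx mulr1 big1 ?addr0 // => j /negbTE ji.
by rewrite ipZl dualE ji mulr0.
Qed.

Lemma expand2 x : x = \sum_i ip x (e i) *: et i.
Proof.
apply/eqP; rewrite -subr_eq0; apply/eqP.
set y := _ - _.
have h0 j : ip y (e j) = 0.
  rewrite ipBl ipsuml (bigD1 j) //= ipZl (ipC (et j)) dualE eqxx mulr1.
  rewrite big1 ?addr0 ?subrr // => i /negbTE ij.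
  by rewrite ipZl (ipC (et i)) dualE eq_sym ij mulr0.
rewrite (expand1 y); apply: big1 => k _.
rewrite [X in ip y X](expand1 (et k)) ipsumr big1 ?scale0r // => j _.
by rewrite ipZr h0 mulr0.
Qed.

Lemma gexp x s : \sum_i ip x (e i) *: gamma (et i) s = gamma x s.
Proof. by rewrite {2}(expand2 x) gsuml; apply: eq_bigr => i _; rewrite gZl. Qed.

Section Skew.
Variable B : V -> V.
Hypotheses (BD : forall u v, B (u + v) = B u + B v)
  (BZ : forall (f : K) u, B (f *: u) = f *: B u)
  (Bsk : forall u w, ip (B u) w + ip u (B w) = 0).

Lemma B0 : B 0 = 0. Proof. by have := BZ 0 0; rewrite !scale0r. Qed.
Lemma Bsum (F : 'I_n -> V) : B (\sum_i F i) = \sum_i B (F i).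
Proof. by apply: (big_morph B) => [x y|]; rewrite ?BD ?B0. Qed.
Lemma Bskew u w : ip (B u) w = - ip u (B w).
Proof. by apply/eqP; rewrite -subr_eq0 opprK Bsk. Qed.

Lemma trace0 : \sum_j ip (B (e j)) (et j) = 0.
Proof.
set t := \sum_j _.
have tN : t = - t.
  rewrite {1}/t.
  transitivity (\sum_j \sum_k ip (e j) (e k) * ip (B (et k)) (et j)).
    apply: eq_bigr => j _.
    rewrite [X in B X](expand2 (e j)) Bsum ipsuml.
    by apply: eq_bigr => k _; rewrite BZ ipZl.
  rewrite exchange_big /= /t -sumrN.
  apply: eq_bigr => k _.
  transitivity (ip (B (et k)) (\sum_j ip (e k) (e j) *: et j)).
    rewrite ipsumr; apply: eq_bigr => j _; by rewrite ipZr ipC.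
  by rewrite -expand2 Bskew ipC.
have : t *+ 2 = 0 by rewrite mulr2n {1}tN addNr.
move=> /(congr1 (fun z => coef_half * z)).
rewrite -mulr_natr mulrA mulrC mulrA (mulrC _ coef_half) half2 mul1r mulr0 //.
Qed.

Definition CB t := \sum_j gamma (et j) (gamma (B (e j)) t).

Lemma Ccomm a t : CB (gamma a t) = gamma a (CB t) - 4%:R *: gamma (B a) t.
Proof.
rewrite /CB.
transitivity (\sum_j ((2%:R * ip (B (e j)) a) *: gamma (et j) t
   - (2%:R * ip (et j) a) *: gamma (B (e j)) t + gamma a (gamma (et j) (gamma (B (e j)) t)))).
  apply: eq_bigr => j _.
  by rewrite (gswap (B (e j)) a t) gBr gZr (gswap (et j) a) opprB addrCA addrC.
rewrite big_split /= gsumr addrC; congr (_ + _).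
rewrite sumrB.
have -> : \sum_j (2%:R * ip (B (e j)) a) *: gamma (et j) t = - (2%:R *: gamma (B a) t).
  rewrite -(gexp (B a) t) scaler_sumr -sumrN; apply: eq_bigr => j _.
  by rewrite scalerA -scaleNr (Bskew (e j) a) (ipC (e j)) mulrN.
have -> : \sum_j (2%:R * ip (et j) a) *: gamma (B (e j)) t = 2%:R *: gamma (B a) t.
  rewrite {2}(expand1 a) Bsum gsuml scaler_sumr; apply: eq_bigr => j _.
  by rewrite BZ gZl scalerA ipC.
by rewrite -opprD -scalerDl -natrD.
Qed.
End Skew.
End Alg.
Unset Implicit Arguments.

Theorem proposition8p1 (R : realType) (K : comAlgType R) (V S : lmodType K)
  (pi : V -> K -> K) (br : V -> V -> V) (ip : V -> V -> K)
  (gamma : V -> S -> S) (n : nat) (e et : 'I_n -> V)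
  (D A : V -> V -> V) (DS : V -> S -> S) :
  courant_algebroid pi br ip ->
  clifford_module ip gamma ->
  local_frame ip e et ->
  gen_connection pi ip D ->
  so_valued ip A ->
  E_connection pi DS ->
  compatible gamma D DS ->
  let D' := fun u v => D u v + A u v in
  let DS' := fun u s => DS u s - coef_half *: cl2 gamma e et (A u) s in
  let alpha := alphaA ip A in
  let vA := traceA e et A in
  [/\ forall u v w, torsion br ip D' u v w = torsion br ip D u v w + alpha u v w,
      compatible gamma D' DS',
      forall s, dirac gamma e et DS' s
                = dirac gamma e et DS s - coef_quarter *: cl3 gamma e et alpha s
                  - coef_quarter *: gamma vA s &
      forall s, dirac gamma e et DS' s + coef_quarter *: cl3 gamma e et (torsion br ip D') s
                = dirac gamma e et DS s + coef_quarter *: cl3 gamma e et (torsion br ip D) s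
                  - coef_quarter *: gamma vA s].
Proof.
move=> [[_ sp _ _ _] _] cm fr _ so _ comp D' DS' alpha vA.
case: so => AD1 AZ1 AD2 AZ2 Ask.
set h := (coef_half : K).
have partI : forall u v w, torsion br ip D' u v w = torsion br ip D u v w + alpha u v w.
  move=> u v w; rewrite /torsion /D' /alpha /alphaA.
  rewrite !(ipDl sp) !(ipNl sp) !(ipDl sp) !(ipDr sp) (Bskew (Ask v) u w) (ipC sp v (A w u)).
  rewrite (ipC sp u (A v w)); ring.
have partIII : forall s, dirac gamma e et DS' s
                = dirac gamma e et DS s - coef_quarter *: cl3 gamma e et alpha s
                  - coef_quarter *: gamma vA s.
  move=> s.
  pose C i t := CB gamma e et (A (e i)) t.
  pose g := gamma vA s.
  pose Q1 := \sum_i gamma (et i) (C i s).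
  pose Q2 := \sum_i \sum_j gamma (A (e i) (e j)) (gamma (et i) (gamma (et j) s)).
  pose Q3 := \sum_i C i (gamma (et i) s).
  have L : dirac gamma e et DS' s = dirac gamma e et DS s - (h * h * h) *: Q1.
    rewrite /dirac /Q1 !scaler_sumr -sumrB; apply: eq_bigr => i _.
    by rewrite /DS' (gBr cm) !(gZr cm) scalerBr !scalerA.
  have E3 : Q3 = Q1 - 4%:R *: g.
    rewrite /Q3 /Q1 /g /vA /traceA (gsuml cm) scaler_sumr -sumrB.
    by apply: eq_bigr => i _; rewrite /C (Ccomm sp cm fr (AD2 _) (AZ2 _) (Ask _)).
  have E2 : Q2 = Q1 - 2%:R *: g.
    rewrite /Q2 /Q1 /g /vA /traceA (gsuml cm) scaler_sumr -sumrB.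
    apply: eq_bigr => j _.
    transitivity (\sum_k ((2%:R * ip (A (e j) (e k)) (et j)) *: gamma (et k) s
       - (2%:R * ip (A (e j) (e k)) (et k)) *: gamma (et j) s
       + gamma (et j) (gamma (et k) (gamma (A (e j) (e k)) s)))).
      apply: eq_bigr => k _.
      by rewrite (gswap sp cm (A (e j) (e k)) (et j)) (gswap sp cm (A (e j) (e k)) (et k))
         (gBr cm) (gZr cm) opprB addrCA addrC.
    rewrite big_split sumrB /=.
    have -> : \sum_k (2%:R * ip (A (e j) (e k)) (et j)) *: gamma (et k) s
              = - (2%:R *: gamma (A (e j) (et j)) s).
      rewrite -(gexp sp cm fr (A (e j) (et j)) s) scaler_sumr -sumrN; apply: eq_bigr => k _.
      by rewrite scalerA -scaleNr (Bskew (Ask (e j)) (e k) (et j)) (ipC sp (e k)) mulrN.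
    have -> : \sum_k (2%:R * ip (A (e j) (e k)) (et k)) *: gamma (et j) s = 0.
      by rewrite -scaler_suml -mulr_sumr (trace0 sp fr (AD2 _) (AZ2 _) (Ask _)) mulr0 scale0r.
    by rewrite subr0 addrC /C /CB (gsumr cm).
  have E1 : cl3 gamma e et alpha s = coef_sixth *: (Q1 + Q2 + Q3).
    rewrite /cl3; congr (_ *: _).
    have T1 : \sum_i \sum_j \sum_k ip (A (e i) (e j)) (e k) *:
        gamma (et i) (gamma (et j) (gamma (et k) s)) = Q1.
      apply: eq_bigr => i _; rewrite /C /CB (gsumr cm); apply: eq_bigr => j _.
      rewrite -(gexp sp cm fr (A (e i) (e j)) s) !(gsumr cm); apply: eq_bigr => k _.
      by rewrite !(gZr cm).
    have T2 : \sum_i \sum_j \sum_k ip (A (e j) (e k)) (e i) *: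
        gamma (et i) (gamma (et j) (gamma (et k) s)) = Q2.
      rewrite exchange_big /=; apply: eq_bigr => j _.
      rewrite exchange_big /=; apply: eq_bigr => k _.
      by rewrite (gexp sp cm fr).
    have T3 : \sum_i \sum_j \sum_k ip (A (e k) (e i)) (e j) *:
        gamma (et i) (gamma (et j) (gamma (et k) s)) = Q3.
      transitivity (\sum_i \sum_k gamma (et i) (gamma (A (e k) (e i)) (gamma (et k) s))).
        apply: eq_bigr => i _; rewrite exchange_big /=; apply: eq_bigr => k _.
        rewrite -(gexp sp cm fr (A (e k) (e i))) (gsumr cm); apply: eq_bigr => j _.
        by rewrite (gZr cm).
      by rewrite exchange_big.
    rewrite -T1 -T2 -T3 -!big_split /=; apply: eq_bigr => i _.
    rewrite -!big_split /=; apply: eq_bigr => j _.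
    rewrite -!big_split /=; apply: eq_bigr => k _.
    by rewrite /alpha /alphaA !scalerDl.
  rewrite L E1 E2 E3 ab4 scalerBr !scalerA sixth3 sixth6 scale1r scalerBr scalerA.
  by rewrite quarterE ab3.
split => //.
- move=> u a s; rewrite /DS' /D' /cl2.
  rewrite -/(CB gamma e et (A u) (gamma a s)) (Ccomm sp cm fr (AD2 _) (AZ2 _) (Ask _)).
  rewrite comp (gDl cm) (gBr cm) !(gZr cm) scalerBr !scalerA.
  rewrite scalerBr !scalerA half4 scale1r.
  exact: ab1.
- move=> s; rewrite partIII.
  have -> : cl3 gamma e et (torsion br ip D') s
            = cl3 gamma e et (torsion br ip D) s + cl3 gamma e et alpha s.
    rewrite /cl3 -scalerDr -!big_split; congr (_ *: _); apply: eq_bigr => i _.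
    rewrite -!big_split; apply: eq_bigr => j _.
    rewrite -!big_split; apply: eq_bigr => k _.
    by rewrite partI scalerDl.
  by rewrite scalerDr ab2.
Qed.
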